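(* For a $d$-dimensional state ensemble $\Omega=\{(p_j,\rho_j)\}_{j=0}^{k-1}$, \[ P_{\mathrm{suc},\mathcal{M}_{\mathcal{I}}}(\Omega)=\widetilde{P}_{\mathrm{suc,SIO}}(\Omega)\ \big(=\widetilde{P}_{\mathrm{suc,DIO}}(\Omega)\big). \]
   Context: $\mathcal{M}_{\mathcal{I}}$ is the set of incoherent measurements: POVMs $\{E_m\}$ with $\Delta(E_m)=E_m$ for all $m$, where $\Delta(\rho)=\sum_i|i\rangle\langle i|\rho|i\rangle\langle i|$ is complete dephasing in the computational basis; $P_{\mathrm{suc},\mathcal{M}_{\mathcal{I}}}(\Omega)=\max_{\{E_j\}\in\mathcal{M}_{\mathcal{I}}}\sum_jp_j\mathrm{tr}(E_j\rho_j)$. For a set of free operations $\mathcal{O}$, $\widetilde{P}_{\mathrm{suc},\mathcal{O}}(\Omega)=\sup\sum_jp_j\mathrm{tr}[\mathcal{N}_{A\to BA'}(\rho_j)(|j\rangle\langle j|_B\otimes I_{A'})]$ over $\mathcal{N}_{A\to BA'}\in\mathcal{O}$, $\dim B=k$, $A'\cong A$. DIO are channels commuting with $\Delta$; SIO (strictly incoherent operations) are channels with Kraus operators $\{K_n\}$ such that both $\{K_n\}$ and $\{K_n^\dagger\}$ map incoherent states to (unnormalized) incoherent states; SIO $\subsetneq$ DIO. *)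

(* Defs.v *)
From HB Require Import structures.
From mathcomp Require Import all_boot all_order all_algebra.
From mathcomp Require Import complex mxtens.
From mathcomp Require Import classical_sets reals.
Set Implicit Arguments. Unset Strict Implicit. Unset Printing Implicit Defensive.
Import Order.TTheory GRing.Theory Num.Theory.
Local Open Scope ring_scope.

Section QDefs.
Variable R : realType.
Local Notation C := (R[i]).

Definition adj {m n} (A : 'M[C]_(m, n)) : 'M[C]_(n, m) := (map_mx Num.conj A)^T.

Definition dephase {n} (A : 'M[C]_n) : 'M[C]_n :=
  \matrix_(i, j) (if i == j then A i j else 0).

(* positive semidefinite (over C this forces hermiticity) *)
Definition psd {n} (A : 'M[C]_n) : Prop :=
  forall v : 'cV[C]_n, 0 <= (adj v *m A *m v) 0 0.

Definition is_state {n} (A : 'M[C]_n) : Prop := psd A /\ \tr A = 1.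

Definition incoherent_state {n} (A : 'M[C]_n) : Prop :=
  is_state A /\ dephase A = A.

Definition ensemble {d k} (p : 'I_k -> R) (rho : 'I_k -> 'M[C]_d) : Prop :=
  [/\ forall j, 0 <= p j, \sum_j p j = 1 & forall j, is_state (rho j)].

Definition POVM {n k} (E : 'I_k -> 'M[C]_n) : Prop :=
  (forall j, psd (E j)) /\ \sum_j E j = 1%:M.

Definition incoherent_POVM {n k} (E : 'I_k -> 'M[C]_n) : Prop :=
  POVM E /\ forall j, dephase (E j) = E j.

Definition kraus_apply {m n r} (K : 'I_r -> 'M[C]_(m, n)) (X : 'M[C]_n) : 'M[C]_m :=
  \sum_l (K l *m X *m adj (K l)).

Definition trace_preserving {m n r} (K : 'I_r -> 'M[C]_(m, n)) : Prop :=
  \sum_l (adj (K l) *m K l) = 1%:M.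

Definition channel {m n} (f : 'M[C]_n -> 'M[C]_m) : Prop :=
  exists r (K : 'I_r -> 'M[C]_(m, n)),
    trace_preserving K /\ forall X, f X = kraus_apply K X.

Definition DIO {m n} (f : 'M[C]_n -> 'M[C]_m) : Prop :=
  channel f /\ forall X, f (dephase X) = dephase (f X).

Definition SIO {m n} (f : 'M[C]_n -> 'M[C]_m) : Prop :=
  exists r (K : 'I_r -> 'M[C]_(m, n)),
    [/\ trace_preserving K, (forall X, f X = kraus_apply K X),
        (forall l rho, incoherent_state rho ->
           dephase (K l *m rho *m adj (K l)) = K l *m rho *m adj (K l))
      & (forall l rho, incoherent_state rho ->
           dephase (adj (K l) *m rho *m K l) = adj (K l) *m rho *m K l)].

Definition Psuc_MI {d k} (p : 'I_k -> R) (rho : 'I_k -> 'M[C]_d) : R :=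
  sup [set x : R | exists E : 'I_k -> 'M[C]_d, incoherent_POVM E /\
         x = complex.Re (\sum_j real_complex R (p j) * \tr (E j *m rho j))].

(* tilde P_suc,O(Omega): channels A -> B A', dim B = k, A' ~ A (dim d);
   the output space B (x) A' is 'M_(k * d) with the Kronecker product *t *)
Definition Psuc_tilde {d k}
    (O : ('M[C]_d -> 'M[C]_(k * d)) -> Prop)
    (p : 'I_k -> R) (rho : 'I_k -> 'M[C]_d) : R :=
  sup [set x : R | exists N : 'M[C]_d -> 'M[C]_(k * d), O N /\
         x = complex.Re (\sum_j real_complex R (p j) *
               \tr (N (rho j) *m (delta_mx j j *t (1%:M : 'M[C]_d))))].

End QDefs.

(* Main.v *)
Require Import Defs.
From HB Require Import structures.
From mathcomp Require Import all_boot all_order all_algebra.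
From mathcomp Require Import complex mxtens.
From mathcomp Require Import classical_sets reals.
Import Order.TTheory GRing.Theory Num.Theory.
Local Open Scope ring_scope.

Section Proofs.
Variable R : realType.
Local Notation C := (R[i]).

Lemma sum1 n (x : 'I_n) (F : 'I_n -> C) :
  (forall a, a != x -> F a = 0) -> \sum_a F a = F x.
Proof. by move=> H; rewrite (bigD1 x) //= big1 ?addr0. Qed.

Lemma entry3 m n p q (A : 'M[C]_(m, n)) (X : 'M[C]_(n, p)) (B : 'M[C]_(p, q)) i l :
  (A *m X *m B) i l = \sum_j \sum_k A i j * X j k * B k l.
Proof.
rewrite mxE exchange_big; apply: eq_bigr => k _.
by rewrite mxE big_distrl.
Qed.

Lemma adjE m n (A : 'M[C]_(m, n)) i j : adj A i j = (A j i)^*.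
Proof. by rewrite /adj !mxE. Qed.

Lemma dephaseE n (A : 'M[C]_n) i j : dephase A i j = if i == j then A i j else 0.
Proof. by rewrite mxE. Qed.

Lemma tr_dephase_r n (A B : 'M[C]_n) :
  \tr (A *m dephase B) = \sum_i A i i * B i i.
Proof.
apply: eq_bigr => i _; rewrite mxE (@sum1 _ i (fun _ => _)) ?dephaseE ?eqxx // => a.
by rewrite dephaseE => /negbTE ->; rewrite mulr0.
Qed.

Lemma tr_dephase_l n (A B : 'M[C]_n) :
  \tr (dephase A *m B) = \sum_i A i i * B i i.
Proof.
apply: eq_bigr => i _; rewrite mxE (@sum1 _ i (fun _ => _)) ?dephaseE ?eqxx // => a.
by rewrite dephaseE eq_sym => /negbTE ->; rewrite mul0r.
Qed.

Lemma tr_dephase_swap n (A B : 'M[C]_n) :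
  \tr (A *m dephase B) = \tr (dephase A *m B).
Proof. by rewrite tr_dephase_r tr_dephase_l. Qed.

Lemma dephaseK n (A : 'M[C]_n) : dephase (dephase A) = dephase A.
Proof. by apply/matrixP => i j; rewrite !dephaseE; case: eqP. Qed.

Lemma dephase1 n : dephase (1%:M : 'M[C]_n) = 1%:M.
Proof.
apply/matrixP => i j; rewrite dephaseE; case: ifP => // /negbT ne.
by rewrite mxE (negbTE ne).
Qed.

Lemma dephase_sum n I (r : seq I) (F : I -> 'M[C]_n) :
  dephase (\sum_(l <- r) F l) = \sum_(l <- r) dephase (F l).
Proof.
apply/matrixP => a b; rewrite dephaseE !summxE.
under [RHS]eq_bigr do rewrite dephaseE.
by case: (a == b) => //; rewrite big1.
Qed.

Lemma quadE n (v : 'cV[C]_n) (A : 'M[C]_n) :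
  (adj v *m A *m v) 0 0 = \sum_i \sum_j (v i 0)^* * A i j * v j 0.
Proof. by rewrite entry3; do 2 (apply: eq_bigr => ? _); rewrite adjE. Qed.

Lemma psd_dephase n (A : 'M[C]_n) : (forall i, 0 <= A i i) -> psd (dephase A).
Proof.
move=> H v; rewrite quadE; apply: sumr_ge0 => i _.
rewrite (@sum1 _ i (fun _ => _)); last by move=> j; rewrite dephaseE eq_sym => /negbTE ->; rewrite mulr0 mul0r.
rewrite dephaseE eqxx mulrAC mulr_ge0 //.
by rewrite mulrC mul_conjC_ge0.
Qed.

Lemma diag_ge0 m n (M : 'M[C]_(m, n)) (D : 'M[C]_m) i :
  (forall a b, a != b -> D a b = 0) -> (forall a, 0 <= D a a) ->
  0 <= (adj M *m D *m M) i i.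
Proof.
move=> H0 H1; rewrite entry3; apply: sumr_ge0 => a _.
rewrite (@sum1 _ a (fun _ => _)); last by move=> b ne; rewrite H0 1?eq_sym // mulr0 mul0r.
rewrite adjE mulrAC mulr_ge0 //.
by rewrite mulrC mul_conjC_ge0.
Qed.


Section Proj.
Variables d k : nat.

Definition P (j : 'I_k) : 'M[C]_(k * d) := delta_mx j j *t (1%:M : 'M[C]_d).

Lemma PE j a b : P j a b = ((a == b) && ((mxtens_unindex a).1 == j))%:R.
Proof.
rewrite -(mxtens_unindexK a) -(mxtens_unindexK b).
case: (mxtens_unindex a) (mxtens_unindex b) => [i1 j1] [i2 j2].
rewrite tensmxE !mxE mxtens_indexK /= (inj_eq (can_inj (@mxtens_indexK _ _))).
rewrite xpair_eqE -natrM mulnb; congr (_%:R).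
case: (i1 =P j) => [->|ne1]; case: (i2 =P j) => [->|ne2]; rewrite ?eqxx ?andbT ?andbF //=.
by rewrite eq_sym (introF eqP ne2).
Qed.

Lemma Poff j a b : a != b -> P j a b = 0.
Proof. by rewrite PE => /negbTE ->. Qed.

Lemma Pge0 j a : 0 <= P j a a.
Proof. by rewrite PE ler0n. Qed.

Lemma Pdiag j : dephase (P j) = P j.
Proof.
apply/matrixP => a b; rewrite dephaseE; case: eqP => // /eqP ne.
by rewrite Poff.
Qed.

Lemma sumP : \sum_j P j = 1%:M.
Proof.
apply/matrixP => a b; rewrite summxE mxE.
under eq_bigr do rewrite PE.
case: (a == b) => /=; last by rewrite big1.
rewrite (@sum1 _ (mxtens_unindex a).1 (fun _ => _)) ?eqxx //.
by move=> j; rewrite eq_sym => /negbTE ->.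
Qed.

Definition Ep r (K : 'I_r -> 'M[C]_(k * d, d)) j : 'M[C]_d :=
  \sum_l (adj (K l) *m P j *m K l).
Arguments Ep {r} K j.

Lemma Ep_ge0 r (K : 'I_r -> 'M[C]_(k * d, d)) j i : 0 <= (Ep K j) i i.
Proof.
rewrite /Ep summxE; apply: sumr_ge0 => l _; apply: diag_ge0.
  exact: Poff.
exact: Pge0.
Qed.

Lemma tr_sum n I (r : seq I) (F : I -> 'M[C]_n) :
  \tr (\sum_(l <- r) F l) = \sum_(l <- r) \tr (F l).
Proof. exact: raddf_sum. Qed.

Lemma value_lemma r (K : 'I_r -> 'M[C]_(k * d, d)) (N : 'M[C]_d -> 'M[C]_(k * d)) :
  (forall X, N X = kraus_apply K X) ->
  (forall s, dephase (N s) = dephase (N (dephase s))) ->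
  forall s j, \tr (N s *m P j) = \tr (dephase (Ep K j) *m s).
Proof.
move=> HN Hc s j.
rewrite -{1}Pdiag tr_dephase_swap Hc -tr_dephase_swap Pdiag.
rewrite HN /kraus_apply mulmx_suml tr_sum.
rewrite mxtrace_mulC tr_dephase_swap mxtrace_mulC.
rewrite /Ep mulmx_suml tr_sum; apply: eq_bigr => l _.
rewrite -!mulmxA mxtrace_mulC !mulmxA [RHS]mxtrace_mulC.
by rewrite !mulmxA.
Qed.

Lemma povm_lemma r (K : 'I_r -> 'M[C]_(k * d, d)) :
  trace_preserving K -> incoherent_POVM (fun j => dephase (Ep K j)).
Proof.
move=> TP; split; last by move=> j; rewrite dephaseK.
split; first by move=> j; apply: psd_dephase => i; apply: Ep_ge0.
rewrite -dephase_sum /Ep exchange_big /=.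
under eq_bigr do rewrite -mulmx_suml -mulmx_sumr sumP mulmx1.
by rewrite TP dephase1.
Qed.


Lemma entry_delta m n q (A : 'M[C]_(m, n)) (B : 'M[C]_(n, q)) a i l :
  (A *m delta_mx a a *m B) i l = A i a * B a l.
Proof.
rewrite entry3 (@sum1 _ a (fun _ => _)); last first.
  move=> x xa; rewrite big1 // => y _.
  by rewrite mxE (negbTE xa) /= mulr0 mul0r.
rewrite (@sum1 _ a (fun _ => _)); last first.
  by move=> y ya; rewrite mxE (negbTE ya) andbF /= mulr0 mul0r.
by rewrite mxE !eqxx mulr1.
Qed.

Lemma delta_state n (a : 'I_n) : incoherent_state (delta_mx a a : 'M[C]_n).
Proof.
have Hd : dephase (delta_mx a a : 'M[C]_n) = delta_mx a a.
  apply/matrixP => i j; rewrite dephaseE; case: (i =P j) => [-> //|/eqP ne].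
  rewrite mxE; case: (i =P a) => [Ei|]; last by [].
  by rewrite Ei eq_sym in ne; rewrite (negbTE ne) andbF.
split => //; split.
  by rewrite -Hd; apply: psd_dephase => i; rewrite mxE ler0n.
rewrite /mxtrace (@sum1 _ a (fun _ => _)); first by rewrite mxE eqxx.
by move=> i ia; rewrite mxE (negbTE ia).
Qed.

Definition covK r (K : 'I_r -> 'M[C]_(k * d, d)) (N : 'M[C]_d -> 'M[C]_(k * d)) :=
  [/\ trace_preserving K, (forall X, N X = kraus_apply K X) &
      (forall s, dephase (N s) = dephase (N (dephase s)))].
Arguments covK {r}.

Lemma SIO_cov (N : 'M[C]_d -> 'M[C]_(k * d)) : SIO N -> exists r K, @covK r K N.
Proof.
case=> r [K [TP HN _ H4]]; exists r, K; split => // s.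
have row l a b c : b != c -> K l a b * (K l a c)^* = 0.
  move=> bc; have := congr1 (fun M : 'M[C]_d => M b c) (H4 l _ (@delta_state _ a)).
  rewrite /= dephaseE (negbTE bc) entry_delta adjE => /esym /eqP.
  rewrite mulf_eq0 conjC_eq0 => /orP[] /eqP ->.
    by rewrite mul0r.
  by rewrite conjC0 mulr0.
apply/matrixP => a a'; rewrite !dephaseE; case: eqP => // <-.
rewrite !HN /kraus_apply !summxE; apply: eq_bigr => l _; rewrite !entry3.
apply: eq_bigr => b _; apply: eq_bigr => c _; rewrite dephaseE adjE.
case: (b =P c) => [-> //|/eqP bc].
by rewrite mulr0 mul0r mulrAC row // mul0r.
Qed.

Lemma DIO_cov (N : 'M[C]_d -> 'M[C]_(k * d)) : DIO N -> exists r K, @covK r K N.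
Proof.
case=> [[r [K [TP HN]]] Hd]; exists r, K; split => // s.
by rewrite -!Hd dephaseK.
Qed.

Section Construction.
Variable E : 'I_k -> 'M[C]_d.
Hypothesis HE : incoherent_POVM E.

Lemma Ege0 j b : 0 <= E j b b.
Proof.
have := (HE.1.1 j) (delta_mx b 0); rewrite entry3.
rewrite (@sum1 _ b (fun _ => _)); last first.
  move=> x xb; rewrite big1 // => y _.
  by rewrite adjE mxE (negbTE xb) /= conjC0 !mul0r.
rewrite (@sum1 _ b (fun _ => _)); last first.
  by move=> y yb; rewrite [delta_mx _ _ y _]mxE (negbTE yb) /= mulr0.
by rewrite adjE !mxE !eqxx /= conjC1 mul1r mulr1.
Qed.

Lemma Ediag j b c : b != c -> E j b c = 0.
Proof. by move=> ne; rewrite -(HE.2 j) dephaseE (negbTE ne). Qed.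

Definition Kc (j : 'I_k) : 'M[C]_(k * d, d) :=
  \matrix_(a, b) (if a == mxtens_index (j, b) then sqrtC (E j b b) else 0).

Lemma KcE j a b : Kc j a b = if a == mxtens_index (j, b) then sqrtC (E j b b) else 0.
Proof. by rewrite mxE. Qed.

Lemma Kreal j a b : (Kc j a b)^* = Kc j a b.
Proof.
rewrite KcE; case: ifP => _; last exact: conjC0.
by apply: geC0_conj; rewrite sqrtC_ge0 Ege0.
Qed.

Lemma Kprop l a a' b c : (a == a') != (b == c) -> Kc l a b * Kc l a' c = 0.
Proof.
move=> H; rewrite !KcE; case: (a =P _) => [Ea|]; last by rewrite mul0r.
case: (a' =P _) => [Ea'|]; last by rewrite mulr0.
move: H; rewrite Ea Ea' (inj_eq (can_inj (@mxtens_indexK _ _))) xpair_eqE eqxx andTb.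
by rewrite eqxx.
Qed.

Lemma Kzero l a b : a != mxtens_index (l, b) -> Kc l a b = 0.
Proof. by rewrite KcE => /negbTE ->. Qed.

Lemma Ksq l b : Kc l (mxtens_index (l, b)) b * Kc l (mxtens_index (l, b)) b = E l b b.
Proof. by rewrite KcE eqxx -expr2 sqrtCK. Qed.

Lemma KK l b c : (adj (Kc l) *m Kc l) b c = E l b c.
Proof.
rewrite mxE (@sum1 _ (mxtens_index (l, b)) (fun _ => _)); last first.
  by move=> a ne; rewrite adjE Kreal Kzero // mul0r.
rewrite adjE Kreal; case: (b =P c) => [<-|/eqP ne]; first by rewrite Ksq.
by rewrite Kprop ?Ediag // eqxx (negbTE ne).
Qed.

Lemma TPc : trace_preserving Kc.
Proof.
apply/matrixP => b c; rewrite summxE.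
under eq_bigr do rewrite KK.
by rewrite -summxE HE.1.2.
Qed.

Lemma covc X : kraus_apply Kc (dephase X) = dephase (kraus_apply Kc X).
Proof.
apply/matrixP => a a'; rewrite dephaseE; case: (a =P a') => [<-|/eqP ne].
  rewrite /kraus_apply !summxE; apply: eq_bigr => l _; rewrite !entry3.
  apply: eq_bigr => b _; apply: eq_bigr => c _; rewrite dephaseE adjE Kreal.
  case: (b =P c) => [-> //|/eqP bc].
  by rewrite mulr0 mul0r mulrAC Kprop ?mul0r // eqxx (negbTE bc).
rewrite /kraus_apply summxE big1 // => l _; rewrite entry3 big1 // => b _.
rewrite big1 // => c _; rewrite dephaseE adjE Kreal.
case: (b =P c) => [<-|/eqP bc]; last by rewrite mulr0 mul0r.
by rewrite mulrAC Kprop ?mul0r // (negbTE ne) eqxx.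
Qed.

Lemma SIOc : SIO (kraus_apply Kc).
Proof.
exists k, Kc; split => //; first exact: TPc.
  move=> l rh [_ Hd]; apply/matrixP => a a'; rewrite dephaseE.
  case: (a =P a') => [-> //|/eqP ne].
  rewrite entry3 big1 // => b _; rewrite big1 // => c _.
  rewrite adjE Kreal; case: (b =P c) => [<-|/eqP bc].
    by rewrite mulrAC Kprop ?mul0r // (negbTE ne) eqxx.
  by rewrite -Hd dephaseE (negbTE bc) mulr0 mul0r.
move=> l rh [_ Hd]; apply/matrixP => b c; rewrite dephaseE.
case: (b =P c) => [-> //|/eqP ne].
rewrite entry3 big1 // => a _; rewrite big1 // => a' _.
rewrite adjE Kreal; case: (a =P a') => [<-|/eqP aa].
  by rewrite mulrAC Kprop ?mul0r // (negbTE ne) eqxx.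
by rewrite -Hd dephaseE (negbTE aa) mulr0 mul0r.
Qed.

Lemma DIOc : DIO (kraus_apply Kc).
Proof.
split; last exact: covc.
by exists k, Kc; split => //; exact: TPc.
Qed.

Lemma EpE l j b :
  (adj (Kc l) *m P j *m Kc l) b b = (l == j)%:R * E l b b.
Proof.
rewrite entry3 (@sum1 _ (mxtens_index (l, b)) (fun _ => _)); last first.
  move=> x ne; rewrite big1 // => y _.
  by rewrite adjE Kreal Kzero // !mul0r.
rewrite (@sum1 _ (mxtens_index (l, b)) (fun _ => _)); last first.
  by move=> y ne; rewrite Poff 1?eq_sym // mulr0 mul0r.
rewrite adjE Kreal mulrAC Ksq mulrC PE eqxx mxtens_indexK /=.
by [].
Qed.

Lemma EpKc j : dephase (Ep Kc j) = E j.
Proof.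
apply/matrixP => b c; rewrite dephaseE; case: (b =P c) => [<-|/eqP ne]; last first.
  by rewrite Ediag.
rewrite /Ep summxE (@sum1 _ j (fun _ => _)); first by rewrite EpE eqxx mul1r.
by move=> l /negbTE lj; rewrite EpE lj mul0r.
Qed.

Lemma covKc : covK Kc (kraus_apply Kc).
Proof. by split => //; [exact: TPc | move=> s; rewrite -!covc dephaseK]. Qed.

End Construction.

Lemma tilde_eq_MI (O : ('M[C]_d -> 'M[C]_(k * d)) -> Prop)
    (p : 'I_k -> R) (rho : 'I_k -> 'M[C]_d) :
  (forall N, O N -> exists r K, @covK r K N) ->
  (forall E, incoherent_POVM E -> O (kraus_apply (Kc E))) ->
  Psuc_tilde O p rho = Psuc_MI p rho.
Proof.
move=> H1 H2; rewrite /Psuc_tilde /Psuc_MI; congr sup.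
apply/seteqP; split => x /=.
  case=> N [ON ->]; have [r [K [TP HN Hc]]] := H1 N ON.
  exists (fun j => dephase (Ep K j)); split; first exact: povm_lemma.
  congr (complex.Re _); apply: eq_bigr => j _; congr (_ * _).
  exact: (@value_lemma _ _ _ HN Hc).
case=> E [HE ->]; exists (kraus_apply (Kc E)); split; first exact: H2.
have [TP HN Hc] := covKc E HE.
congr (complex.Re _); apply: eq_bigr => j _; congr (_ * _).
by rewrite (@value_lemma _ _ _ HN Hc) EpKc.
Qed.

End Proj.
End Proofs.

Theorem lemmaS2 (R : realType) (d k : nat)
    (p : 'I_k -> R) (rho : 'I_k -> 'M[R[i]]_d) :
  ensemble p rho ->
  Psuc_MI p rho = Psuc_tilde (@SIO R (k * d) d) p rho /\
  Psuc_tilde (@SIO R (k * d) d) p rho = Psuc_tilde (@DIO R (k * d) d) p rho.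
Proof.
move=> _.
rewrite !tilde_eq_MI //.
- by move=> N HN; exact: (@DIO_cov R d k N HN).
- by move=> E HE; exact: (@DIOc R d k E HE).
- by move=> N HN; exact: (@SIO_cov R d k N HN).
- by move=> E HE; exact: (@SIOc R d k E HE).
Qed.
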